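(* Let $\Delta$ be a finite saturated sample set and $\delta$ a $\Delta$-diagram. For every basic term $t$ and every homomorphism $h$ from the term algebra to $\mathbf{W}$, if $h(x)$ strongly extends $D_x(\delta)$ for each variable $x$ occurring in $t$, then $[\![t]\!]_h$ strongly extends $D_t(\delta)$.
   Context: Time warps: join-preserving maps $f\colon\omega^+\to\omega^+$, $\omega^+=\omega\cup\{\omega\}$, ordered pointwise; $p(m)=\bigvee\{k\in\omega\mid k<m\}$; $\mathbf{W}=\langle W,\wedge,\vee,\circ,{}^\star,\mathrm{id}\rangle$ with pointwise meet/join, composition, identity and $f^\star$ the largest time warp $h$ with $f\circ h\le p$; $\mathrm{last}(f)=\min\{m\in\omega^+\mid f(m)=f(\omega)\}$. Terms use $\wedge,\vee,\cdot,{}',1$ (interpreted as $\wedge,\vee,\circ,{}^\star,\mathrm{id}$); basic terms use only variables, $\cdot,{}',1$; $[\![t]\!]_h$ is the value of $t$ under $h$. Samples (formal expressions): $\alpha::=\kappa\mid t[\alpha]\mid \mathrm{suc}(\alpha)\mid\mathrm{last}(t)$ with $\kappa$ a time variable and $t$ a basic term. The relation $\leadsto$: $t[\alpha]\leadsto\alpha$, $\mathrm{suc}(\alpha)\leadsto\alpha$, $t[\alpha]\leadsto t[\mathrm{last}(t)]$, $(tu)[\alpha]\leadsto t[u[\alpha]]$, $t'[\alpha]\leadsto t[t'[\alpha]]$, $t'[\alpha]\leadsto t[\mathrm{suc}(t'[\alpha])]$; a sample set is saturated if closed under $\leadsto$. $S(n)=n+1$ for $n\in\omega$, $S(\omega)=\omega$.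 For saturated $\Delta$, a $\Delta$-diagram is $\delta\colon\Delta\to\omega^+$ such that, whenever the samples mentioned belong to $\Delta$: (1) $\delta(\alpha)\le\delta(\beta)\Rightarrow\delta(t[\alpha])\le\delta(t[\beta])$; (2) $\delta(\alpha)=0\Rightarrow\delta(t[\alpha])=0$; (3) $\delta(\mathrm{suc}(\alpha))=S(\delta(\alpha))$; (4) for $t[\alpha]\in\Delta$: $\delta(\mathrm{last}(t))\le\delta(\alpha)\iff\delta(t[\mathrm{last}(t)])=\delta(t[\alpha])$; (5) $\delta(\mathrm{last}(t))=\omega\Rightarrow\delta(t[\mathrm{last}(t)])=\omega$; (6) $\delta(1[\alpha])=\delta(\alpha)$; (7) $\delta(\mathrm{last}(1))=\omega$; (8) $\delta((tu)[\alpha])=\delta(t[u[\alpha]])$; (9) $\delta(\mathrm{last}(tu))=\omega\Rightarrow\delta(\mathrm{last}(t))=\delta(\mathrm{last}(u))=\omega$; (10) for $t'[\alpha]\in\Delta$: $0<\delta(\alpha)<\omega\Rightarrow\delta(t[t'[\alpha]])<\delta(\alpha)$; (11) for $t'[\alpha]\in\Delta$: $\delta(t'[\alpha])<\omega\Rightarrow\delta(\alpha)\le\delta(t[\mathrm{suc}(t'[\alpha])])$; (12) $\delta(\mathrm{last}(t'))=\omega\Rightarrow\delta(\mathrm{last}(t))=\omega$. For a basic term $t$, $D_t(\delta)=\{(\delta(\alpha),\delta(t[\alpha]))\mid t[\alpha]\in\Delta\}$. A time warp $f$ extends $D_t(\delta)$ if $f(i)=j$ for all $(i,j)\in D_t(\delta)$,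 and strongly extends it if moreover $D_t(\delta)\neq\emptyset$ and $\delta(\mathrm{last}(t))=\omega$ together imply $\mathrm{last}(f)=\omega$. *)

(* Defs.v *)
From Stdlib Require Import List ClassicalEpsilon.
Import ListNotations.

(* omega^+ = omega ∪ {omega} *)
Inductive wp : Type := Fin (n : nat) | Om.

Definition wle (a b : wp) : Prop :=
  match a, b with
  | Fin m, Fin n => m <= n
  | _, Om => True
  | Om, Fin _ => False
  end.

Definition wlt (a b : wp) : Prop := wle a b /\ a <> b.

Definition is_sup (S : wp -> Prop) (x : wp) : Prop :=
  (forall y, S y -> wle y x) /\ (forall z, (forall y, S y -> wle y z) -> wle x z).

(* join-preserving maps (preserve all joins, including the empty one) *)
Definition timewarp (f : wp -> wp) : Prop :=
  forall (S : wp -> Prop) x, is_sup S x ->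
    is_sup (fun y => exists z, S z /\ f z = y) (f x).

Definition fle (f g : wp -> wp) : Prop := forall x, wle (f x) (g x).

(* p(m) = join {k in omega | k < m}: p 0 = 0, p (n+1) = n, p omega = omega *)
Definition pw (m : wp) : wp :=
  match m with
  | Fin 0 => Fin 0
  | Fin (S n) => Fin n
  | Om => Om
  end.

Definition wmin (a b : wp) : wp :=
  match a, b with
  | Fin m, Fin n => Fin (Nat.min m n)
  | Fin m, Om => Fin m
  | Om, b => b
  end.

Definition wmax (a b : wp) : wp :=
  match a, b with
  | Fin m, Fin n => Fin (Nat.max m n)
  | Fin _, Om => Om
  | Om, _ => Om
  end.

Definition star (f : wp -> wp) : wp -> wp :=
  epsilon (inhabits (fun x : wp => x))
    (fun h => timewarp h /\ fle (fun x => f (h x)) pw /\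
      forall h', timewarp h' -> fle (fun x => f (h' x)) pw -> fle h' h).

Definition lastw (f : wp -> wp) : wp :=
  epsilon (inhabits Om)
    (fun m => f m = f Om /\ forall k, f k = f Om -> wle m k).

Definition Sw (a : wp) : wp := match a with Fin n => Fin (S n) | Om => Om end.

Inductive term : Type :=
| TVar (x : nat)
| TMeet (t u : term)
| TJoin (t u : term)
| TComp (t u : term)
| TStar (t : term)
| TOne.

Inductive bterm : Type :=
| BVar (x : nat)
| BComp (t u : bterm)
| BStar (t : bterm)
| BOne.

Fixpoint emb (t : bterm) : term :=
  match t with
  | BVar x => TVar x
  | BComp t u => TComp (emb t) (emb u)
  | BStar t => TStar (emb t)
  | BOne => TOne
  end.

(* value of a term under the homomorphism determined by the valuation v *)
Fixpoint eval (v : nat -> wp -> wp) (t : term) : wp -> wp :=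
  match t with
  | TVar x => v x
  | TMeet t u => fun m => wmin (eval v t m) (eval v u m)
  | TJoin t u => fun m => wmax (eval v t m) (eval v u m)
  | TComp t u => fun m => eval v t (eval v u m)
  | TStar t => star (eval v t)
  | TOne => fun m => m
  end.

Fixpoint occurs (x : nat) (t : bterm) : Prop :=
  match t with
  | BVar y => x = y
  | BComp t u => occurs x t \/ occurs x u
  | BStar t => occurs x t
  | BOne => False
  end.

Inductive sample : Type :=
| SVar (k : nat)
| SApp (t : bterm) (a : sample)
| SSuc (a : sample)
| SLast (t : bterm).

Inductive leadsto : sample -> sample -> Prop :=
| ld_app t a : leadsto (SApp t a) a
| ld_suc a : leadsto (SSuc a) a
| ld_last t a : leadsto (SApp t a) (SApp t (SLast t))
| ld_comp t u a : leadsto (SApp (BComp t u) a) (SApp t (SApp u a))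
| ld_star1 t a : leadsto (SApp (BStar t) a) (SApp t (SApp (BStar t) a))
| ld_star2 t a : leadsto (SApp (BStar t) a) (SApp t (SSuc (SApp (BStar t) a))).

Definition saturated (D : list sample) : Prop :=
  forall a b, In a D -> leadsto a b -> In b D.

(* Delta-diagrams: each condition is imposed when all samples mentioned are in D *)
Definition diagram (D : list sample) (d : sample -> wp) : Prop :=
  (* (1) *)
  (forall t a b, In a D -> In b D -> In (SApp t a) D -> In (SApp t b) D ->
     wle (d a) (d b) -> wle (d (SApp t a)) (d (SApp t b))) /\
  (* (2) *)
  (forall t a, In a D -> In (SApp t a) D ->
     d a = Fin 0 -> d (SApp t a) = Fin 0) /\
  (* (3) *)
  (forall a, In a D -> In (SSuc a) D -> d (SSuc a) = Sw (d a)) /\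
  (* (4) *)
  (forall t a, In (SApp t a) D -> In a D -> In (SLast t) D ->
     In (SApp t (SLast t)) D ->
     (wle (d (SLast t)) (d a) <-> d (SApp t (SLast t)) = d (SApp t a))) /\
  (* (5) *)
  (forall t, In (SLast t) D -> In (SApp t (SLast t)) D ->
     d (SLast t) = Om -> d (SApp t (SLast t)) = Om) /\
  (* (6) *)
  (forall a, In a D -> In (SApp BOne a) D -> d (SApp BOne a) = d a) /\
  (* (7) *)
  (In (SLast BOne) D -> d (SLast BOne) = Om) /\
  (* (8) *)
  (forall t u a, In (SApp (BComp t u) a) D -> In (SApp t (SApp u a)) D ->
     d (SApp (BComp t u) a) = d (SApp t (SApp u a))) /\
  (* (9) *)
  (forall t u, In (SLast (BComp t u)) D -> In (SLast t) D -> In (SLast u) D ->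
     d (SLast (BComp t u)) = Om -> d (SLast t) = Om /\ d (SLast u) = Om) /\
  (* (10) *)
  (forall t a, In (SApp (BStar t) a) D -> In a D ->
     In (SApp t (SApp (BStar t) a)) D ->
     wlt (Fin 0) (d a) -> wlt (d a) Om ->
     wlt (d (SApp t (SApp (BStar t) a))) (d a)) /\
  (* (11) *)
  (forall t a, In (SApp (BStar t) a) D -> In a D ->
     In (SApp t (SSuc (SApp (BStar t) a))) D ->
     wlt (d (SApp (BStar t) a)) Om ->
     wle (d a) (d (SApp t (SSuc (SApp (BStar t) a))))) /\
  (* (12) *)
  (forall t, In (SLast (BStar t)) D -> In (SLast t) D ->
     d (SLast (BStar t)) = Om -> d (SLast t) = Om).

(* f extends D_t(d) = {(d a, d (t[a])) | t[a] in D} *)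
Definition extends (f : wp -> wp) (t : bterm) (D : list sample) (d : sample -> wp) : Prop :=
  forall a, In (SApp t a) D -> f (d a) = d (SApp t a).

Definition strongly_extends (f : wp -> wp) (t : bterm) (D : list sample) (d : sample -> wp) : Prop :=
  extends f t D d /\
  ((exists a, In (SApp t a) D) -> d (SLast t) = Om -> lastw f = Om).

(* Main.v *)
Require Import Defs.
From Stdlib Require Import List Classical ClassicalEpsilon Lia Arith Wf_nat.

Lemma wle_Om a : wle a Om.
Proof. destruct a; exact I. Qed.

Lemma wle_0 a : wle (Fin 0) a.
Proof. destruct a; simpl; auto; lia. Qed.

Lemma wle_refl a : wle a a.
Proof. destruct a; simpl; auto. Qed.

Lemma wle_trans a b c : wle a b -> wle b c -> wle a c.
Proof. destruct a, b, c; simpl; auto; try lia; intros; contradiction. Qed.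

Lemma wle_antisym a b : wle a b -> wle b a -> a = b.
Proof. destruct a, b; simpl; intros; try contradiction; auto. f_equal; lia. Qed.

Lemma wle_Om_inv a : wle Om a -> a = Om.
Proof. destruct a; simpl; auto; intros []. Qed.

Lemma not_wle_S x k : ~ wle x (Fin k) -> wle (Fin (S k)) x.
Proof. destruct x; simpl; auto; lia. Qed.

Lemma wlt_S x j : wlt x (Fin (S j)) -> wle x (Fin j).
Proof. unfold wlt; destruct x; simpl; intros [H1 H2]; try contradiction.
  assert (n <> S j) by (intro; subst; auto). lia. Qed.

Lemma pw_ge j x : wle (Fin (S j)) x -> wle (Fin j) (pw x).
Proof. destruct x as [n|]; simpl; auto. destruct n; simpl; lia. Qed.

Lemma pw_fin n : exists k, pw (Fin n) = Fin k.
Proof. destruct n; simpl; eauto. Qed.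

Lemma least_nat (P : nat -> Prop) n : P n -> exists m, P m /\ forall k, P k -> m <= k.
Proof.
  induction n as [n IH] using (well_founded_induction lt_wf). intro Pn.
  destruct (classic (exists k, k < n /\ P k)) as [[k [Hk Pk]]|Hno].
  - exact (IH k Hk Pk).
  - exists n; split; auto. intros k Pk. destruct (le_lt_dec n k); auto.
    exfalso; apply Hno; eauto.
Qed.

Lemma sup_exists S : exists x, is_sup S x.
Proof.
  destruct (classic (exists N, forall y, S y -> wle y (Fin N))) as [[N HN]|Hno].
  - destruct (least_nat (fun N => forall y, S y -> wle y (Fin N)) N HN) as [m [Hm Hmin]]. exists (Fin m). split; auto.
    intros z Hz. destruct z as [k|]; [|exact I]. simpl. apply Hmin. exact Hz.
  - exists Om. split; [intros; apply wle_Om|].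
    intros z Hz. destruct z as [k|]; [|exact I]. exfalso; apply Hno; eauto.
Qed.

Lemma tw_mono f : timewarp f -> forall a b, wle a b -> wle (f a) (f b).
Proof.
  intros Hf a b Hab.
  assert (Hs : is_sup (fun y => y = a \/ y = b) b).
  { split. intros y [->| ->]; auto using wle_refl. intros z Hz; apply Hz; auto. }
  destruct (Hf _ _ Hs) as [H1 _]. apply H1. exists a; auto.
Qed.

Lemma tw_zero f : timewarp f -> f (Fin 0) = Fin 0.
Proof.
  intros Hf.
  assert (Hs : is_sup (fun _ => False) (Fin 0)).
  { split. intros y []. intros; apply wle_0. }
  destruct (Hf _ _ Hs) as [_ H2].
  apply wle_antisym; [|apply wle_0]. apply H2. intros y [z [[] _]].
Qed.

Lemma sup_nat : is_sup (fun y => exists n, y = Fin n) Om.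
Proof.
  split. intros; apply wle_Om.
  intros z Hz. destruct z as [k|]; [|exact I].
  specialize (Hz (Fin (S k)) (ex_intro _ _ eq_refl)). simpl in Hz; lia.
Qed.

Lemma tw_cont f : timewarp f -> forall z, (forall n, wle (f (Fin n)) z) -> wle (f Om) z.
Proof.
  intros Hf z Hz. destruct (Hf _ _ sup_nat) as [_ H2]. apply H2.
  intros y [w [[n ->] <-]]. apply Hz.
Qed.

Lemma tw_of h :
  (forall a b, wle a b -> wle (h a) (h b)) -> h (Fin 0) = Fin 0 ->
  (forall z, (forall n, wle (h (Fin n)) z) -> wle (h Om) z) -> timewarp h.
Proof.
  intros Hm H0 Hc Sp x [Hub Hl]. split.
  - intros y [z [Sz <-]]. apply Hm, Hub, Sz.
  - intros w Hw. destruct (classic (Sp x)) as [Sx|nSx].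
    + apply Hw; eauto.
    + destruct x as [n|].
      * destruct n as [|n]. rewrite H0; apply wle_0.
        exfalso.
        assert (Hu : forall y, Sp y -> wle y (Fin n)).
        { intros y Sy. pose proof (Hub y Sy). destruct y as [k|]; simpl in *; try contradiction.
          assert (k <> S n) by (intro; subst; auto). lia. }
        specialize (Hl _ Hu). simpl in Hl; lia.
      * apply Hc. intro n.
        destruct (classic (exists y, Sp y /\ wle (Fin n) y)) as [[y [Sy Hy]]|Hno].
        -- apply wle_trans with (h y); auto. apply Hw; eauto.
        -- exfalso.
           assert (Hu : forall y, Sp y -> wle y (Fin n)).
           { intros y Sy. destruct y as [k|]; simpl.
             - destruct (le_lt_dec k n); auto. exfalso; apply Hno; exists (Fin k); split; auto; simpl; lia.
             - apply Hno; exists Om; split; auto; exact I. }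
           exact (Hl _ Hu).
Qed.

Lemma tw_comp f g : timewarp f -> timewarp g -> timewarp (fun m => f (g m)).
Proof.
  intros Hf Hg S x Hs. destruct (Hf _ _ (Hg _ _ Hs)) as [H1 H2]. split.
  - intros y [z [Sz <-]]. apply H1. exists (g z); split; eauto.
  - intros w Hw. apply H2. intros y [z0 [[z1 [Sz1 <-]] <-]]. apply Hw; eauto.
Qed.

Lemma tw_id : timewarp (fun m => m).
Proof.
  intros S x [H1 H2]. split.
  - intros y [z [Sz <-]]; auto.
  - intros w Hw. apply H2. intros y Sy. apply Hw; eauto.
Qed.

Lemma lastw_spec f : f (lastw f) = f Om /\ forall k, f k = f Om -> wle (lastw f) k.
Proof.
  unfold lastw. apply epsilon_spec.
  destruct (classic (exists n, f (Fin n) = f Om)) as [[n Hn]|Hno].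
  - destruct (least_nat (fun n => f (Fin n) = f Om) n Hn) as [m [Hm Hmin]]. exists (Fin m). split; auto.
    intros k Hk. destruct k as [k|]; [|exact I]. simpl; auto.
  - exists Om. split; auto. intros k Hk. destruct k as [k|]; [|exact I].
    exfalso; eauto.
Qed.

Lemma lastw_Om_iff f : lastw f = Om <-> forall n, f (Fin n) <> f Om.
Proof.
  destruct (lastw_spec f) as [H1 H2]. split.
  - intros E n Hn. specialize (H2 _ Hn). rewrite E in H2. exact H2.
  - intros H. destruct (lastw f) as [n|] eqn:E; auto. exfalso; eapply H; eauto.
Qed.

Lemma lastOm_props f : timewarp f -> lastw f = Om ->
  f Om = Om /\ forall n, exists k, f (Fin n) = Fin k.
Proof.
  intros Hf Hl. rewrite lastw_Om_iff in Hl.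
  assert (HOm : f Om = Om).
  { destruct (f Om) as [N|] eqn:E; auto. exfalso.
    destruct N as [|M].
    - apply (Hl 0). rewrite (tw_zero f Hf). auto.
    - assert (Hle : wle (f Om) (Fin M)).
      { apply tw_cont; auto. intro n. pose proof (tw_mono f Hf (Fin n) Om (wle_Om _)).
        try rewrite E in H. specialize (Hl n). try rewrite E in Hl.
        destruct (f (Fin n)) as [k|]; simpl in *; try contradiction.
        assert (k <> S M) by (intro; subst; auto). lia. }
      rewrite E in Hle; simpl in Hle; lia. }
  split; auto. intro n. specialize (Hl n). rewrite HOm in Hl.
  destruct (f (Fin n)); eauto. congruence.
Qed.

Definition adm (f h : wp -> wp) := timewarp h /\ fle (fun x => f (h x)) pw.

Lemma star_spec f : timewarp f ->
  timewarp (star f) /\ fle (fun x => f (star f x)) pw /\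
  forall h', timewarp h' -> fle (fun x => f (h' x)) pw -> fle h' (star f).
Proof.
  intro Hf. unfold star. apply epsilon_spec.
  set (T := fun x y => exists h, adm f h /\ h x = y).
  set (h0 := fun x => epsilon (inhabits (Fin 0)) (fun s => is_sup (T x) s)).
  assert (Hs : forall x, is_sup (T x) (h0 x)).
  { intro x. unfold h0. apply epsilon_spec. apply sup_exists. }
  exists h0. split; [|split].
  - apply tw_of.
    + intros a b Hab. apply (proj2 (Hs a)). intros y [h [[Hh Hp] <-]].
      apply wle_trans with (h b). apply tw_mono; auto. apply (proj1 (Hs b)). exists h; split; [split|]; auto.
    + apply wle_antisym; [|apply wle_0]. apply (proj2 (Hs _)).
      intros y [h [[Hh _] <-]]. rewrite (tw_zero h Hh). apply wle_refl.
    + intros z Hz. apply (proj2 (Hs _)). intros y [h [[Hh Hp] <-]].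
      apply tw_cont; auto. intro n. apply wle_trans with (h0 (Fin n)); auto.
      apply (proj1 (Hs _)). exists h; split; [split|]; auto.
  - intro x. destruct (Hf _ _ (Hs x)) as [_ H2]. apply H2.
    intros y [z [[h [[Hh Hp] <-]] <-]]. apply Hp.
  - intros h' Hh' Hp x. apply (proj1 (Hs x)). exists h'; split; [split|]; auto.
Qed.

Definition step (k : nat) (c : wp) (x : wp) : wp :=
  match x with Fin n => if Nat.leb k n then c else Fin 0 | Om => c end.

Lemma step_tw j c : timewarp (step (S j) c).
Proof.
  apply tw_of.
  - intros a b Hab. unfold step. destruct a as [n|], b as [m|]; simpl in Hab; try contradiction.
    + destruct (Nat.leb (S j) n) eqn:E1, (Nat.leb (S j) m) eqn:E2; try apply wle_refl; try apply wle_0.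
      apply Nat.leb_le in E1; apply Nat.leb_nle in E2; lia.
    + destruct (Nat.leb (S j) n); [apply wle_refl|apply wle_0].
    + apply wle_refl.
  - reflexivity.
  - intros z Hz. specialize (Hz (S j)). simpl in Hz. rewrite Nat.leb_refl in Hz. exact Hz.
Qed.

Lemma step_adm f j c : timewarp f -> wle (f c) (Fin j) ->
  fle (fun x => f (step (S j) c x)) pw.
Proof.
  intros Hf Hc x. unfold step. destruct x as [n|].
  - destruct (Nat.leb (S j) n) eqn:E.
    + apply Nat.leb_le in E. apply wle_trans with (Fin j); auto.
      apply (pw_ge j (Fin n)). simpl; lia.
    + rewrite (tw_zero f Hf). apply wle_0.
  - apply wle_Om.
Qed.

Lemma step_at j c : step (S j) c (Fin (S j)) = c.
Proof. simpl. rewrite Nat.leb_refl. reflexivity. Qed.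

Lemma star_Om f : timewarp f -> lastw f = Om -> star f Om = Om.
Proof.
  intros Hf Hl. destruct (lastOm_props f Hf Hl) as [HOm Hfin].
  destruct (star_spec f Hf) as (Hh & Hp & Hmax).
  destruct (star f Om) as [K|] eqn:E; auto. exfalso.
  destruct (Hfin (S K)) as [M HM].
  assert (H1 := Hmax _ (step_tw M (Fin (S K)))
                  (step_adm f M _ Hf ltac:(rewrite HM; apply wle_refl)) (Fin (S M))).
  rewrite step_at in H1.
  pose proof (tw_mono _ Hh (Fin (S M)) Om (wle_Om _)). rewrite E in H.
  pose proof (wle_trans _ _ _ H1 H). simpl in H0; lia.
Qed.

Lemma star_fin f : timewarp f -> lastw f = Om -> forall n, star f (Fin n) <> Om.
Proof.
  intros Hf Hl n E. destruct (lastOm_props f Hf Hl) as [HOm _].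
  destruct (star_spec f Hf) as (Hh & Hp & Hmax).
  specialize (Hp (Fin n)). cbv beta in Hp. rewrite E, HOm in Hp.
  destruct (pw_fin n) as [k Hk]. rewrite Hk in Hp. exact Hp.
Qed.

Section Cases.
Variables (D : list sample) (d : sample -> wp).
Hypothesis Hs : saturated D.
Hypothesis Hd : diagram D d.

Lemma one_case : strongly_extends (fun m => m) BOne D d.
Proof.
  destruct Hd as (D1 & D2 & D3 & D4 & D5 & D6 & D7 & D8 & D9 & D10 & D11 & D12).
  split.
  - intros a Ha. symmetry. apply D6; auto. eapply Hs; [exact Ha|constructor].
  - intros _ _. apply lastw_Om_iff. intros n; discriminate.
Qed.

Lemma comp_case f g t u : timewarp f -> timewarp g ->
  strongly_extends f t D d -> strongly_extends g u D d ->
  strongly_extends (fun m => f (g m)) (BComp t u) D d.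
Proof.
  intros Hf Hg [Ef Sf] [Eg Sg].
  destruct Hd as (D1 & D2 & D3 & D4 & D5 & D6 & D7 & D8 & D9 & D10 & D11 & D12).
  split.
  - intros a Ha.
    assert (I1 : In (SApp t (SApp u a)) D) by (eapply Hs; [exact Ha|constructor]).
    assert (I2 : In (SApp u a) D) by (eapply Hs; [exact I1|constructor]).
    rewrite Eg by exact I2. rewrite Ef by exact I1. symmetry; apply D8; auto.
  - intros [a Ha] EL.
    assert (I1 : In (SApp t (SApp u a)) D) by (eapply Hs; [exact Ha|constructor]).
    assert (I2 : In (SApp u a) D) by (eapply Hs; [exact I1|constructor]).
    assert (I3 : In (SApp (BComp t u) (SLast (BComp t u))) D) by (eapply Hs; [exact Ha|constructor]).
    assert (I4 : In (SLast (BComp t u)) D) by (eapply Hs; [exact I3|constructor]).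
    assert (I5 : In (SApp t (SLast t)) D) by (eapply Hs; [exact I1|constructor]).
    assert (I6 : In (SLast t) D) by (eapply Hs; [exact I5|constructor]).
    assert (I7 : In (SApp u (SLast u)) D) by (eapply Hs; [exact I2|constructor]).
    assert (I8 : In (SLast u) D) by (eapply Hs; [exact I7|constructor]).
    destruct (D9 t u I4 I6 I8 EL) as [Lt Lu].
    assert (Hlf := Sf (ex_intro (fun s => In (SApp t s) D) _ I1) Lt).
    assert (Hlg := Sg (ex_intro (fun s => In (SApp u s) D) _ I2) Lu).
    destruct (lastOm_props g Hg Hlg) as [gOm gfin].
    rewrite lastw_Om_iff in Hlf. apply lastw_Om_iff. intro n.
    rewrite gOm. destruct (gfin n) as [k ->]. apply Hlf.
Qed.

Lemma star_case f t : timewarp f -> strongly_extends f t D d ->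
  strongly_extends (star f) (BStar t) D d.
Proof.
  intros Hf [Hext Hst].
  destruct Hd as (D1 & D2 & D3 & D4 & D5 & D6 & D7 & D8 & D9 & D10 & D11 & D12).
  destruct (star_spec f Hf) as (Hh & Hp & Hmax).
  assert (Hin : forall a, In (SApp (BStar t) a) D ->
    In a D /\ In (SApp t (SApp (BStar t) a)) D /\
    In (SApp t (SSuc (SApp (BStar t) a))) D /\ In (SSuc (SApp (BStar t) a)) D /\
    In (SApp (BStar t) (SLast (BStar t))) D /\ In (SLast (BStar t)) D /\
    In (SLast t) D).
  { intros a Ha.
    assert (Ia: In a D) by (eapply Hs; [exact Ha| constructor]).
    assert (Itb: In (SApp t (SApp (BStar t) a)) D) by (eapply Hs; [exact Ha| apply ld_star1]).
    assert (Itsb: In (SApp t (SSuc (SApp (BStar t) a))) D) by (eapply Hs; [exact Ha| apply ld_star2]).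
    assert (Isb: In (SSuc (SApp (BStar t) a)) D) by (eapply Hs; [exact Itsb| constructor]).
    assert (I3 : In (SApp (BStar t) (SLast (BStar t))) D) by (eapply Hs; [exact Ha|constructor]).
    assert (I4 : In (SLast (BStar t)) D) by (eapply Hs; [exact I3|constructor]).
    assert (I5 : In (SApp t (SLast t)) D) by (eapply Hs; [exact Itb|constructor]).
    assert (I6 : In (SLast t) D) by (eapply Hs; [exact I5|constructor]).
    tauto. }
  assert (Hfin : forall a, In (SApp (BStar t) a) D -> forall n, d a = Fin n ->
            star f (Fin n) = d (SApp (BStar t) a)).
  { intros a Ha n Hn.
    destruct (Hin a Ha) as (Ia & Itb & Itsb & Isb & _).
    set (b := SApp (BStar t) a) in *.
    destruct n as [|j].
    - rewrite (tw_zero _ Hh). symmetry. apply (D2 _ _ Ia Ha Hn).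
    - assert (E1: f (d b) = d (SApp t b)) by (apply Hext; exact Itb).
      assert (E2: f (Sw (d b)) = d (SApp t (SSuc b))).
      { rewrite <- (D3 b Ha Isb). apply Hext; exact Itsb. }
      assert (H10: wle (f (d b)) (Fin j)).
      { rewrite E1. apply wlt_S. rewrite <- Hn. apply (D10 t a Ha Ia Itb); rewrite Hn;
        split; simpl; try lia; try exact I; discriminate. }
      assert (H11: d b <> Om -> wle (Fin (S j)) (f (Sw (d b)))).
      { intro Hne. rewrite E2, <- Hn. apply (D11 t a Ha Ia Itsb). split; [apply wle_Om | exact Hne]. }
      apply wle_antisym.
      + destruct (d b) as [k|] eqn:Ek; [|apply wle_Om].
        destruct (classic (wle (star f (Fin (S j))) (Fin k))) as [Hle|Hnle]; auto.
        exfalso. apply not_wle_S in Hnle.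
        pose proof (tw_mono f Hf _ _ Hnle).
        pose proof (Hp (Fin (S j))). simpl in H0.
        pose proof (H11 ltac:(discriminate)). cbn [Sw] in H1.
        pose proof (wle_trans _ _ _ (wle_trans _ _ _ H1 H) H0). simpl in H2; lia.
      + pose proof (Hmax _ (step_tw j (d b)) (step_adm f j _ Hf H10) (Fin (S j))).
        rewrite step_at in H. exact H. }
  assert (HOm : (exists a, In (SApp (BStar t) a) D) -> d (SLast (BStar t)) = Om -> lastw f = Om).
  { intros [a Ha] EL. destruct (Hin a Ha) as (_ & Itb & _ & _ & _ & I4 & I6).
    apply (Hst (ex_intro (fun s => In (SApp t s) D) _ Itb)). apply D12; auto. }
  split.
  - intros a Ha. destruct (d a) as [n|] eqn:Eda.
    + apply (Hfin a Ha n Eda).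
    + destruct (Hin a Ha) as (Ia & Itb & Itsb & Isb & I3 & I4 & I6).
      set (b := SApp (BStar t) a) in *.
      assert (E : d (SApp (BStar t) (SLast (BStar t))) = d b).
      { apply (D4 (BStar t) a Ha Ia I4 I3). rewrite Eda. apply wle_Om. }
      destruct (d (SLast (BStar t))) as [n|] eqn:EL.
      * assert (Hc : star f (Fin n) = d b) by (rewrite <- E; apply (Hfin _ I3 n EL)).
        apply wle_antisym.
        -- destruct (d b) as [k|] eqn:Ek; [|apply wle_Om].
           assert (H11 : wle (d a) (d (SApp t (SSuc b)))).
           { apply (D11 t a Ha Ia Itsb). split; [apply wle_Om|]. intro X. change (d b = Om) in X. congruence. }
           rewrite Eda in H11. apply wle_Om_inv in H11.
           rewrite <- (Hext _ Itsb), (D3 b Ha Isb), Ek in H11. simpl in H11.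
           apply tw_cont; auto. intro m.
           destruct (classic (wle (star f (Fin m)) (Fin k))) as [Hle|Hnle]; auto.
           exfalso. apply not_wle_S in Hnle.
           pose proof (tw_mono f Hf _ _ Hnle). rewrite H11 in H.
           pose proof (Hp (Fin m)). cbv beta in H0.
           destruct (pw_fin m) as [q Hq]. rewrite Hq in H0.
           exact (wle_trans _ _ _ H H0).
        -- rewrite <- Hc. apply tw_mono; auto. apply wle_Om.
      * assert (Hb : d b = Om) by (rewrite <- E; apply D5; auto).
        rewrite Hb. apply star_Om; auto. apply HOm; eauto.
  - intros Hex EL. specialize (HOm Hex EL).
    apply lastw_Om_iff. intro n. rewrite (star_Om f Hf HOm). apply star_fin; auto.
Qed.

End Cases.

Lemma main_ind D d v : saturated D -> diagram D d -> (forall x, timewarp (v x)) ->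
  forall t, (forall x, occurs x t -> strongly_extends (v x) (BVar x) D d) ->
  timewarp (eval v (emb t)) /\ strongly_extends (eval v (emb t)) t D d.
Proof.
  intros Hs Hd Hv t. induction t as [x|t1 IH1 t2 IH2|t IH|]; simpl; intros Hocc.
  - split; [apply Hv|apply Hocc; simpl; reflexivity].
  - destruct (IH1 (fun x H => Hocc x (or_introl H))) as [T1 S1].
    destruct (IH2 (fun x H => Hocc x (or_intror H))) as [T2 S2].
    split; [apply tw_comp|apply comp_case]; auto.
  - destruct (IH Hocc) as [T S1]. split; [apply star_spec|apply star_case]; auto.
  - split; [apply tw_id|apply one_case]; auto.
Qed.

Theorem lemma3p8 (Delta : list sample) (delta : sample -> wp) (t : bterm)
  (v : nat -> wp -> wp) :
  saturated Delta ->
  diagram Delta delta ->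
  (forall x, timewarp (v x)) ->
  (forall x, occurs x t -> strongly_extends (v x) (BVar x) Delta delta) ->
  strongly_extends (eval v (emb t)) t Delta delta.
Proof.
  intros Hs Hd Hv Hocc. apply (main_ind Delta delta v Hs Hd Hv t Hocc).
Qed.
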